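(* Let $G\in\mathcal{F}$ with adjacency matrix $A$, and let $x,y$ be two distinct non-adjacent vertices of $G$. Let $S$ be the $2\times 2$ principal submatrix of $A^2-A-2I$ indexed by $x,y$, that is, $S=\begin{bmatrix} d_x-2 & d_{xy}\\ d_{xy} & d_y-2\end{bmatrix}$. Then $S$ is positive semi-definite, and $\det S=(d_x-2)(d_y-2)-d_{xy}^2\geq 0$.
   Context: Graphs are finite and simple; spectrum means adjacency spectrum. $\mathcal{F}$ denotes the set of connected graphs whose spectrum consists of exactly one eigenvalue $r>2$, exactly one eigenvalue $s<-1$, and all remaining eigenvalues (with multiplicity) equal to $2$ or $-1$. $d_v$ is the degree of $v$ and $d_{uv}$ is the number of common neighbors of $u$ and $v$. *)

(* Defs.v *)
From mathcomp Require Import all_boot all_order all_algebra.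
From mathcomp Require Import reals.
Set Implicit Arguments. Unset Strict Implicit. Unset Printing Implicit Defensive.
Import Order.TTheory GRing.Theory Num.Theory.
Local Open Scope ring_scope.

Definition simple_graph (n : nat) (e : rel 'I_n) : Prop :=
  symmetric e /\ irreflexive e.

Definition connected_graph (n : nat) (e : rel 'I_n) : Prop :=
  forall x y : 'I_n, connect e x y.

Definition adj_mx (R : ringType) (n : nat) (e : rel 'I_n) : 'M[R]_n :=
  \matrix_(i, j) (e i j)%:R.

Definition deg (n : nat) (e : rel 'I_n) (v : 'I_n) : nat := #|[set u | e v u]|.
Definition codeg (n : nat) (e : rel 'I_n) (u v : 'I_n) : nat :=
  #|[set w | e u w && e v w]|.

(* The class F: connected graph whose adjacency spectrum (with multiplicity)
   is {r, s, 2^a, (-1)^b} with r > 2 and s < -1, i.e. the characteristic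
   polynomial is (X - r)(X - s)(X - 2)^a (X + 1)^b. *)
Definition in_F (R : realType) (n : nat) (e : rel 'I_n) : Prop :=
  simple_graph e /\ connected_graph e /\
  exists (r s : R) (a b : nat),
    2 < r /\ s < -1 /\
    char_poly (adj_mx R e) =
      ('X - r%:P) * ('X - s%:P) * ('X - 2%:P) ^+ a * ('X + 1) ^+ b.

Definition princ2 (R : ringType) (n : nat) (M : 'M[R]_n) (x y : 'I_n) : 'M[R]_2 :=
  \matrix_(i, j) M (if i == 0 then x else y) (if j == 0 then x else y).

Definition psd (R : realType) (m : nat) (S : 'M[R]_m) : Prop :=
  S^T = S /\ forall v : 'cV[R]_m, 0 <= (v^T *m S *m v) 0 0.

(* Main.v *)
Require Import Defs.
From mathcomp Require Import all_boot all_order all_algebra.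
From mathcomp Require Import reals.
From mathcomp Require Import ring lra.
Import Order.TTheory GRing.Theory Num.Theory.
Local Open Scope ring_scope.

Section H.
Variable R : realType.

Lemma sym_sq0 n (C : 'M[R]_n) : C^T = C -> C *m C = 0 -> C = 0.
Proof.
move=> sC CC; apply/matrixP => i j.
have h : \sum_k C k j ^+ 2 = 0.
  have e : (C^T *m C) j j = 0 by rewrite sC CC mxE.
  rewrite -[RHS]e mxE; apply: eq_bigr => k _; rewrite !mxE expr2 //.
have := psumr_eq0P (fun k _ => sqr_ge0 (C k j)) h (i:=i) isT.
by rewrite mxE => /eqP; rewrite sqrf_eq0 => /eqP.
Qed.

Lemma trmxX n (B : 'M[R]_n.+1) k : (B ^+ k)^T = B^T ^+ k.
Proof.
elim: k => [|k IH]; first by rewrite !expr0 trmx1.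
by rewrite exprS trmx_mul IH mulmxE -exprSr.
Qed.

Lemma sym_nil0 n (B : 'M[R]_n.+1) k : B^T = B -> B ^+ k.+1 = 0 -> B = 0.
Proof.
move=> sB; elim: k => [|k IH]; first by rewrite expr1.
move=> h; apply: IH; apply: sym_sq0; first by rewrite trmxX sB.
by rewrite mulmxE -exprD addSnnS exprD h mulr0.
Qed.

Lemma horner_sym n (A : 'M[R]_n.+1) p : A^T = A -> (horner_mx A p)^T = horner_mx A p.
Proof.
move=> sA; elim/poly_ind: p => [|p c IH]; first by rewrite rmorph0 trmx0.
rewrite rmorphD rmorphM /= horner_mx_X horner_mx_C linearD /= trmx_mul IH sA tr_scalar_mx.
by have := comm_mx_horner p (comm_mx_refl A); rewrite /comm_mx => ->.
Qed.

Lemma t1 (r s : R) (a b : nat) :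
 (('X - r%:P)*('X - s%:P)*('X - 2%:P)*('X + 1)) ^+ (a+b+1) =
 (('X - r%:P) * ('X - s%:P) * ('X - 2%:P) ^+ a * ('X + 1) ^+ b) *
 (('X - r%:P)^+(a+b) * ('X - s%:P)^+(a+b) * ('X - 2%:P)^+(b+1) * ('X+1)^+(a+1)).
Proof.
rewrite !exprMn.
have e1 : (a + b + 1 = 1 + (a + b))%N by rewrite addnC.
have e3 : (a + b + 1 = a + (b + 1))%N by rewrite addnA.
have e4 : (a + b + 1 = b + (a + 1))%N by rewrite addnCA addnA.
rewrite {1}e1 {1}e1 {1}e3 e4 !exprD !expr1.
move: (('X - r%:P) ^+ a) (('X - r%:P) ^+ b) (('X - s%:P) ^+ a) (('X - s%:P) ^+ b)
  (('X - 2%:P) ^+ a) (('X - 2%:P) ^+ b) (('X + 1) ^+ a) (('X + 1) ^+ b) => ? ? ? ? ? ? ? ?.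
ring.
Qed.

Definition qf {m} (w : 'cV[R]_m) (B : 'M[R]_m) := (w^T *m B *m w) 0 0.

Lemma qfB m w (B C : 'M[R]_m) : qf w (B - C) = qf w B - qf w C.
Proof. by rewrite /qf mulmxBr mulmxBl !mxE. Qed.

Lemma qfZ m w (B : 'M[R]_m) k : qf w (k *: B) = k * qf w B.
Proof. by rewrite /qf -scalemxAr -scalemxAl mxE. Qed.

Lemma sqnorm_ge0 m (u : 'cV[R]_m) : 0 <= (u^T *m u) 0 0.
Proof. rewrite mxE; apply: sumr_ge0 => i _; rewrite mxE -expr2; exact: sqr_ge0. Qed.

Lemma qf_idem m w (B : 'M[R]_m) k : B^T = B -> B *m B = k *: B -> k != 0 ->
  qf w B = k^-1 * ((B *m w)^T *m (B *m w)) 0 0.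
Proof.
move=> sB BB k0.
have -> : qf w B = qf w (k^-1 *: (B *m B)) by rewrite BB scalerA mulVf // scale1r.
rewrite qfZ; congr (_ * _).
by rewrite /qf trmx_mul sB !mulmxA.
Qed.

Lemma key n (A : 'M[R]_n.+1) (r s : R) (a b : nat) : A^T = A -> 2 < r -> s < -1 ->
  char_poly A = ('X - r%:P) * ('X - s%:P) * ('X - 2%:P) ^+ a * ('X + 1) ^+ b ->
  forall w : 'cV_n.+1, 0 <= qf w (A *m A - A - 2%:M).
Proof.
move=> sA hr hs hc w.
pose q : {poly R} := ('X - r%:P)*('X - s%:P)*('X - 2%:P)*('X + 1).
have hq0 : horner_mx A q = 0.
  apply: (@sym_nil0 _ _ (a+b)); first exact: horner_sym.
  by rewrite -rmorphXn /= -[(a+b).+1]addn1 (t1 r s a b) -hc rmorphM /= Cayley_Hamilton mul0r.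
pose F : {poly R} := 'X^2 - 'X - 2%:P.
have hM : A *m A - A - 2%:M = horner_mx A F.
  by rewrite /F !rmorphB /= rmorphXn /= horner_mx_X (horner_mx_C A (2:R)) expr2 mulmxE.
pose X1 := ('X - s%:P) * F.
pose Y1 := ('X - r%:P) * F.
pose kx := (r - s) * (r - 2) * (r + 1).
pose ky := (s - r) * (s - 2) * (s + 1).
have eX : X1 * X1 - kx%:P * X1 =
   q * ('X^2 + r%:P * 'X + r%:P^+2 - (s%:P + 1) * ('X + r%:P) + s%:P - 2).
  rewrite /X1 /F /q /kx; ring.
have eY : Y1 * Y1 - ky%:P * Y1 =
   q * ('X^2 + s%:P * 'X + s%:P^+2 - (r%:P + 1) * ('X + s%:P) + r%:P - 2).
  rewrite /Y1 /F /q /ky; ring.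
have eM : (r - s)%:P * F = X1 - Y1 by rewrite /X1 /Y1 /F; ring.
have hX : horner_mx A X1 *m horner_mx A X1 = kx *: horner_mx A X1.
  apply/eqP; rewrite -subr_eq0 -mul_scalar_mx -(horner_mx_C A) mulmxE -!rmorphM /= -rmorphB /= eX.
  by rewrite rmorphM /= hq0 mul0r.
have hY : horner_mx A Y1 *m horner_mx A Y1 = ky *: horner_mx A Y1.
  apply/eqP; rewrite -subr_eq0 -mul_scalar_mx -(horner_mx_C A) mulmxE -!rmorphM /= -rmorphB /= eY.
  by rewrite rmorphM /= hq0 mul0r.
have kxp : 0 < kx by rewrite /kx; apply: mulr_gt0; [apply: mulr_gt0|]; lra.
have kyn : ky < 0.
  have h1 : 0 < (s - r) * (s - 2) by rewrite nmulr_rgt0; lra.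
  by rewrite /ky pmulr_rlt0 //; lra.
have sX := @horner_sym n A X1 sA.
have sY := @horner_sym n A Y1 sA.
have hqX : 0 <= qf w (horner_mx A X1).
  rewrite (@qf_idem _ w _ _ sX hX (lt0r_neq0 kxp)); apply: mulr_ge0; last exact: sqnorm_ge0.
  by rewrite invr_ge0 ltW.
have hqY : qf w (horner_mx A Y1) <= 0.
  rewrite (@qf_idem _ w _ _ sY hY (ltr0_neq0 kyn)); apply: mulr_le0_ge0; last exact: sqnorm_ge0.
  by rewrite invr_le0 ltW.
have e : (r - s) * qf w (A *m A - A - 2%:M) = qf w (horner_mx A X1) - qf w (horner_mx A Y1).
  by rewrite -qfZ -qfB hM -mul_scalar_mx -(horner_mx_C A) mulmxE -rmorphM eM rmorphB.
have rs : 0 < r - s by lra.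
by rewrite -(pmulr_rge0 _ rs) e; lra.
Qed.
Lemma sum_bool_card n (P : pred 'I_n) : \sum_j ((P j)%:R : R) = #|[set j | P j]|%:R.
Proof.
rewrite -natr_sum; congr (_%:R); rewrite -sum1_card [RHS]big_mkcond /=.
by apply: eq_bigr => j _; rewrite inE; case: (P j).
Qed.

Lemma AA_entry n (e : rel 'I_n) u w : symmetric e ->
  (adj_mx R e *m adj_mx R e) u w = (codeg e u w)%:R.
Proof.
move=> symE; rewrite mxE.
under eq_bigr => j _ do rewrite !mxE -natrM mulnb (symE j w).
exact: sum_bool_card.
Qed.

Lemma M_entry n (e : rel 'I_n) u w : symmetric e ->
  (adj_mx R e *m adj_mx R e - adj_mx R e - 2%:M) u w =
   (codeg e u w)%:R - (e u w)%:R - (u == w)%:R * 2.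
Proof.
move=> symE; have h := @AA_entry _ e u w symE; rewrite mxE in h; rewrite !mxE h.
by rewrite mulr_natl.
Qed.

Lemma deg_codeg n (e : rel 'I_n) u : deg e u = codeg e u u.
Proof. by apply: eq_card => z; rewrite !inE andbb. Qed.

Lemma codegC n (e : rel 'I_n) u w : codeg e u w = codeg e w u.
Proof. by apply: eq_card => z; rewrite !inE andbC. Qed.

Lemma princ2_sub n (M : 'M[R]_n) x y :
  let g := fun i : 'I_2 => if i == 0 then x else y in
  princ2 M x y = (mxsub id g 1%:M)^T *m M *m mxsub id g 1%:M.
Proof.
move=> g.
rewrite trmx_mxsub trmx1.
have -> : princ2 M x y = mxsub g g M by apply/matrixP => i j; rewrite !mxE.
rewrite -mulmxA mulmx_colsub mulmx1 mul_rowsub_mx mul1mx.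
by apply/matrixP => i j; rewrite !mxE.
Qed.
End H.
Theorem lemma4p2 (R : realType) (n : nat) (e : rel 'I_n) (x y : 'I_n) :
  in_F R e -> x != y -> ~~ e x y ->
  let A := adj_mx R e in
  let S := princ2 (A *m A - A - 2%:M) x y in
  S = \matrix_(i < 2, j < 2)
        (if i == j then (if i == 0 then (deg e x)%:R - 2 else (deg e y)%:R - 2)
         else (codeg e x y)%:R) /\
  psd S /\
  \det S = ((deg e x)%:R - 2) * ((deg e y)%:R - 2) - (codeg e x y)%:R ^+ 2 /\
  0 <= ((deg e x)%:R - 2) * ((deg e y)%:R - 2) - (codeg e x y)%:R ^+ 2 :> R.
Proof.
case: n e x y => [|n] e x y; first by case: x.
move=> [[symE irrE] [_ [r [s [a [b [hr [hs hc]]]]]]]] xy nexy A S.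
have sA : A^T = A by apply/matrixP => i j; rewrite !mxE symE.
have hS : S = \matrix_(i < 2, j < 2)
        (if i == j then (if i == 0 then (deg e x)%:R - 2 else (deg e y)%:R - 2)
         else (codeg e x y)%:R).
  apply/matrixP => i j; rewrite /S /princ2 [LHS]mxE [RHS]mxE.
  case: i => [[|[|//]] ?]; case: j => [[|[|//]] ?]; rewrite /= M_entry //.
  - by rewrite eqxx irrE deg_codeg mul1r subr0.
  - by rewrite (negbTE nexy) (negbTE xy) mul0r !subr0.
  - by rewrite (symE y x) (negbTE nexy) eq_sym (negbTE xy) codegC mul0r !subr0.
  - by rewrite eqxx irrE deg_codeg mul1r subr0.
set d1 : R := (deg e x)%:R - 2.
set d2 : R := (deg e y)%:R - 2.
set c : R := (codeg e x y)%:R.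
have quad : forall v : 'cV[R]_2, (v^T *m S *m v) 0 0 =
   d1 * v 0 0 ^+ 2 + 2 * c * v 0 0 * v 1 0 + d2 * v 1 0 ^+ 2.
  have l1 : lift ord0 (ord0 : 'I_1) = 1 :> 'I_2 by apply/val_inj.
  have n10 : (1 == 0 :> 'I_2) = false by [].
  have n01 : (0 == 1 :> 'I_2) = false by [].
  move=> v; rewrite hS !mxE !big_ord_recl !big_ord0 /= !mxE !big_ord_recl !big_ord0 /= !mxE l1 !eqxx n10 n01.
  by rewrite /d1 /d2 /c; ring.
have hdet : \det S = d1 * d2 - c ^+ 2.
  rewrite hS (expand_det_row _ ord0) !big_ord_recr big_ord0 /= /cofactor !det_mx11 !mxE /=.
  by rewrite /d1 /d2 /c; ring.
have psdv : forall v : 'cV[R]_2, 0 <= (v^T *m S *m v) 0 0.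
  move=> v; rewrite /S princ2_sub.
  set P := mxsub id _ 1%:M.
  have := @key R n A r s a b sA hr hs hc (P *m v).
  by rewrite /qf trmx_mul !mulmxA.
have Q : forall p q : R, 0 <= d1 * p ^+ 2 + 2 * c * p * q + d2 * q ^+ 2.
  move=> p q; have := psdv (\col_(i < 2) (if i == 0 then p else q)).
  by rewrite quad !mxE.
have ha := Q 1 0.
have hb := Q 0 1.
have h1 := Q d2 (- c).
have h2 := Q c (- d1).
have h3 := Q 1 (- 1).
have hc0 : 0 <= c by rewrite /c ler0n.
split; first exact: hS.
split.
  split; last exact: psdv.
  rewrite hS; apply/matrixP => i j; rewrite !mxE [j == i]eq_sym.
  by case: eqP => [->|].
split; first exact: hdet.
have e1 : d1 * d2 ^+ 2 + 2 * c * d2 * - c + d2 * (- c) ^+ 2 = d2 * (d1 * d2 - c ^+ 2) by ring.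
have e2 : d1 * c ^+ 2 + 2 * c * c * - d1 + d2 * (- d1) ^+ 2 = d1 * (d1 * d2 - c ^+ 2) by ring.
have e3 : d1 * 1 ^+ 2 + 2 * c * 1 * - 1 + d2 * (- 1) ^+ 2 = d1 + d2 - 2 * c by ring.
have e4 : d1 * 0 ^+ 2 + 2 * c * 0 * 1 + d2 * 1 ^+ 2 = d2 by ring.
have e5 : d1 * 1 ^+ 2 + 2 * c * 1 * 0 + d2 * 0 ^+ 2 = d1 by ring.
rewrite e1 in h1; rewrite e2 in h2; rewrite e3 in h3; rewrite e4 in hb; rewrite e5 in ha.
have [d2p|] := ltrP 0 d2; first by rewrite -(pmulr_rge0 _ d2p).
have [d1p|] := ltrP 0 d1; first by rewrite -(pmulr_rge0 _ d1p).
move=> d1n d2n.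
have -> : d1 = 0 by lra.
have -> : d2 = 0 by lra.
have -> : c = 0 by lra.
by rewrite mul0r expr0n /= subr0.
Qed.
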